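(* For distinct sets $X,Y\in\mathcal{X}_2$, the inclusion $X\subset Y$ holds if and only if $X\subseteq1+4\mathbb{N}_0$ and $i(Y)<i(X)$.
   Context: $\mathbb{N}=\{1,2,\dots\}$, $\mathbb{N}_0=\{0\}\cup\mathbb{N}$, $x^{\mathbb{N}}=\{x^k:k\in\mathbb{N}\}$. $\mathcal{X}_2=\{\overline{a^{\mathbb{N}}}:a\in\mathbb{N}\setminus2\mathbb{N},\ a\ne1\}$, closures taken in the $2$-adic topology on $\mathbb{N}\setminus2\mathbb{N}$ (generated by the sets $x+2^m\mathbb{N}_0$). $\mathbb{Z}_{2^m}^\times$ is the unit group of $\mathbb{Z}/2^m\mathbb{Z}$, $\pi_m:\mathbb{N}\to\mathbb{Z}/2^m\mathbb{Z}$, $x\mapsto x+2^m\mathbb{Z}$. For $X\in\mathcal{X}_2$, $n(X)=\min\{m\in\mathbb{N}:X=\pi_m^{-1}(\pi_m(X)),\ |\pi_m(X)|\ge3\}$ and $i(X)$ is the index of the subgroup $\pi_{n(X)}(X)$ in $\mathbb{Z}_{2^{n(X)}}^\times$. *)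

(* Defs.v *)
From mathcomp Require Import all_boot all_order all_algebra all_fingroup all_solvable.
From mathcomp Require Import boolp.
From Stdlib Require Import ClassicalEpsilon.

Set Implicit Arguments.
Unset Strict Implicit.
Unset Printing Implicit Defensive.

(* Closure of S in the 2-adic topology on N \ 2N, generated by the sets
   x + 2^m N_0 (x odd): x is in the closure iff x is odd and every basic
   neighbourhood x + 2^m N_0 of x meets S. *)
Definition clos2 (S : nat -> Prop) (x : nat) : Prop :=
  odd x /\ forall m : nat, exists s, S s /\ exists k : nat, s = x + 2 ^ m * k.

Definition powset (a : nat) (s : nat) : Prop := exists k, 0 < k /\ s = a ^ k.

Definition inX2 (X : nat -> Prop) : Prop :=
  exists a : nat, odd a /\ a <> 1 /\ X = clos2 (powset a).

(* pi_m(X) as a subset of Z/2^mZ (used for m >= 1) *)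
Definition piset (X : nat -> Prop) (m : nat) : {set 'Z_(2 ^ m)} :=
  [set r : 'Z_(2 ^ m) | `[< exists x, X x /\ inZp x = r >]].

Definition nprop (X : nat -> Prop) (m : nat) : Prop :=
  0 < m /\
  (forall y : nat, 0 < y -> (X y <-> exists x, X x /\ (inZp y : 'Z_(2 ^ m)) = inZp x)) /\
  3 <= #|piset X m|.

Definition nX (X : nat -> Prop) : nat :=
  epsilon (inhabits 0) (fun m => nprop X m /\ forall k, nprop X k -> m <= k).

Definition piunits (X : nat -> Prop) (n : nat) : {set {unit 'Z_(2 ^ n)}} :=
  [set u : {unit 'Z_(2 ^ n)} | val u \in piset X n].

Definition iX (X : nat -> Prop) : nat :=
  #| units_Zp (2 ^ nX X) : piunits X (nX X) |%g.

(* Main.v *)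
Require Import Defs.
From mathcomp Require Import all_boot all_order all_algebra all_fingroup all_solvable.
From mathcomp Require Import boolp.
From mathcomp Require Import zify.
From Stdlib Require Import ZArith Lia ClassicalEpsilon.
Import ssrnat.
Set Implicit Arguments. Unset Strict Implicit.

Definition cg (N x y : nat) := exists q : Z, Z.of_nat x = (Z.of_nat y + Z.of_nat N * q)%Z.

Lemma oddE (u : nat) : odd u -> exists v, u = 2 * v + 1.
Proof. move=> H; exists u./2; have := odd_double_half u; rewrite H; lia. Qed.

Lemma cg_refl N x : cg N x x.
Proof. exists 0%Z; lia. Qed.
Lemma cg_sym N x y : cg N x y -> cg N y x.
Proof. case=> q H; exists (- q)%Z; lia. Qed.
Lemma cg_trans N x y z : cg N x y -> cg N y z -> cg N x z.
Proof. case=> q H [r H']; exists (q + r)%Z; lia. Qed.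
Lemma cg_mull N x y z : cg N x y -> cg N (z * x) (z * y).
Proof. case=> q H; exists (Z.of_nat z * q)%Z. rewrite !Nat2Z.inj_mul H. lia. Qed.
Lemma cg_add N x y z : cg N x y -> cg N (x + z) (y + z).
Proof. case=> q H; exists q; lia. Qed.
Lemma cg_addN N x : cg N (x + N) x.
Proof. exists 1%Z; lia. Qed.

Lemma Z2pow t : Z.of_nat (2 ^ (t.+1)) = (2 * Z.of_nat (2 ^ t))%Z.
Proof. rewrite expnS; lia. Qed.

Lemma cg_le k m x y : k <= m -> cg (2^m) x y -> cg (2^k) x y.
Proof.
move=> km [q H]; exists (Z.of_nat (2 ^ (m-k)) * q)%Z.
have E : 2 ^ m = 2 ^ k * 2 ^ (m - k) by rewrite -expnD subnKC.
rewrite H E Nat2Z.inj_mul. lia.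
Qed.

Lemma cg_split t x y : cg (2 ^ t) x y -> cg (2 ^ (t.+1)) x y \/ cg (2 ^ (t.+1)) x (y + 2 ^ t).
Proof.
case=> q H; rewrite /cg Z2pow.
case: (Z.Even_or_Odd q) => [[q' Eq]|[q' Eq]]; [left|right]; exists q'; rewrite ?Nat2Z.inj_add; lia.
Qed.

Lemma cgP N x y : 0 < N -> x = y %[mod N] <-> cg N x y.
Proof.
move=> N0; split.
- move=> H; exists (Z.of_nat (x %/ N) - Z.of_nat (y %/ N))%Z.
  have Ex := divn_eq x N; have Ey := divn_eq y N.
  rewrite H in Ex.
  have E1 : Z.of_nat x = (Z.of_nat (x %/ N) * Z.of_nat N + Z.of_nat (y %% N))%Z.
    by rewrite {1}Ex Nat2Z.inj_add Nat2Z.inj_mul.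
  have E2 : Z.of_nat y = (Z.of_nat (y %/ N) * Z.of_nat N + Z.of_nat (y %% N))%Z.
    by rewrite {1}Ey Nat2Z.inj_add Nat2Z.inj_mul.
  rewrite E1 E2; ring.
- case=> q H; case: (Z.le_gt_cases 0 q) => hq.
  + have -> : x = Z.to_nat q * N + y by lia.
    by rewrite modnMDl.
  + have -> : y = Z.to_nat (- q) * N + x by lia.
    by rewrite modnMDl.
Qed.

Lemma inZpP m x y : 0 < m -> ((inZp x : 'Z_(2^m)) = inZp y) <-> cg (2^m) x y.
Proof.
move=> m0; have h2 : 1 < 2 ^ m by rewrite -{1}(expn0 2) ltn_exp2l.
rewrite -cgP ?expn_gt0 //; split.
- move/(congr1 val) => /=. by rewrite Zp_cast.
- move=> H; apply: val_inj => /=. by rewrite Zp_cast.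
Qed.

Lemma pow2d c t w : 2 <= t -> odd w -> c = 1 + 2 ^ t * w ->
  forall d, exists wd, odd wd /\ c ^ (2 ^ d) = 1 + 2 ^ (t+d) * wd.
Proof.
move=> T2 ow Ec; elim=> [|d [wd [owd IH]]].
  by exists w; rewrite expn0 expn1 addn0.
exists (wd + 2 * 2 ^ (t + d - 2) * (wd * wd)); split.
  by rewrite oddD owd !oddM.
rewrite expnS mulnC expnM IH.
have E : 2 ^ (t+d) = 4 * 2 ^ (t+d-2).
  by rewrite -[4]/(2 ^ 2) -expnD subnKC // (leq_trans T2 (leq_addr _ _)).
have E' : 2 ^ (t+d.+1) = 8 * 2 ^ (t+d-2).
  by rewrite addnS expnS E; lia.
rewrite E' E. set Q := 2 ^ (t+d-2). lia.
Qed.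

Lemma lift c t w b : 2 <= t -> odd w -> c = 1 + 2 ^ t * w -> odd b ->
  forall d y, cg (2 ^ t) y b -> exists k, cg (2 ^ (t+d)) (b * c ^ k) y.
Proof.
move=> T2 ow Ec ob; elim=> [|d IH] y Hy.
  by exists 0; rewrite expn0 muln1 addn0; apply: cg_sym.
have [k [q Hk]] := IH y Hy.
have [[q' Eq]|[q' Eq]] := Z.Even_or_Odd q.
  by exists k; exists q'; rewrite addnS Z2pow; lia.
have [wd [owd Ewd]] := pow2d T2 ow Ec d.
exists (k + 2 ^ d); rewrite (expnD c) Ewd.
have oc : odd c by rewrite Ec oddD oddM oddX; case: t T2 {Ec IH Hk Hy Ewd}.
have oz : odd (b * c ^ k) by rewrite oddM ob oddX oc orbT.
have [z1 Ez] := oddE oz. have [w1 Ew] := oddE owd.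
exists (q' + 1 + Z.of_nat z1 + Z.of_nat w1 + 2 * Z.of_nat z1 * Z.of_nat w1)%Z.
rewrite addnS Z2pow.
set z := b * c ^ k in Hk Ez *.
have -> : b * (c ^ k * (1 + 2 ^ (t + d) * wd)) = z + 2 ^ (t+d) * z * wd by rewrite /z; lia.
set P := 2 ^ (t + d) in Hk *.
rewrite Nat2Z.inj_add !Nat2Z.inj_mul.
have Hz : Z.of_nat z = (2 * Z.of_nat z1 + 1)%Z by lia.
have Hw : Z.of_nat wd = (2 * Z.of_nat w1 + 1)%Z by lia.
have HH : (Z.of_nat P * Z.of_nat z * Z.of_nat wd = Z.of_nat P * (2 * Z.of_nat z1 + 1) * (2 * Z.of_nat w1 + 1))%Z by rewrite Hz Hw.
lia.
Qed.

Lemma twopart n : 0 < n -> exists s u, n = 2 ^ s * u /\ odd u.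
Proof.
elim/ltn_ind: n => n IH n0.
case on: (odd n); first by exists 0, n; rewrite expn0 mul1n.
have E := odd_double_half n; rewrite on /= in E.
have h1 : n./2 < n by lia.
have h2 : 0 < n./2 by lia.
have [s [u [Eu ou]]] := IH _ h1 h2.
exists s.+1, u; split => //; rewrite expnS -mulnA -Eu; lia.
Qed.

Lemma Zcancel (Q x y : Z) : (0 < Q)%Z -> (Q * x = Q * y)%Z -> x = y.
Proof. move=> hQ H; apply: (Z.mul_reg_l _ _ Q) => //; lia. Qed.

Definition good a t := [/\ 3 <= t, odd a, (exists w, odd w /\ a ^ 2 = 1 + 2 ^ t * w),
  ~ cg (2 ^ t) a 1 & ((a %% 4 = 1 -> cg (2 ^ (t.-1)) a 1) /\
  (a %% 4 = 3 -> cg (2 ^ (t.-1)) (a+1) 0 /\ ~ cg (2 ^ t) (a+1) 0))].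

Lemma descr a : odd a -> a <> 1 -> exists t, good a t.
Proof.
move=> oa a1.
have : a %% 4 = 1 \/ a %% 4 = 3 by lia.
case=> a4.
- have [|s [u [Eu ou]]] := @twopart (a - 1); first lia.
  case: s Eu => [|[|s]] Eu; rewrite ?expn0 ?expn1 ?mul1n in Eu.
  + have : odd (a - 1) by rewrite Eu. lia.
  + have := oddE ou; lia.
  + have Q0 : 0 < 2 ^ s by rewrite expn_gt0.
    set Q := 2 ^ s in Q0.
    have E4 : 2 ^ s.+2 = 4 * Q by rewrite !expnS; lia.
    have E8 : 2 ^ s.+3 = 8 * Q by rewrite !expnS; lia.
    rewrite E4 in Eu.
    have Ea : a = 1 + 4 * Q * u by lia.
    exists s.+3; split => //.
    * exists (u + 2 * Q * u * u); split; first by rewrite oddD ou !oddM.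
      rewrite E8 Ea; lia.
    * rewrite E8 => -[q Hq].
      have [v Ev] := oddE ou.
      have : (Z.of_nat Q * (1 + 2 * Z.of_nat v) = Z.of_nat Q * (2 * q))%Z.
        apply: (Zcancel (Q := 4%Z)); first lia. rewrite Ea Ev in Hq. lia.
      move/Zcancel; lia.
    * split; last lia.
      move=> _; rewrite /= E4; exists (Z.of_nat u); lia.
- have [|s [u [Eu ou]]] := @twopart (a + 1); first lia.
  case: s Eu => [|[|s]] Eu; rewrite ?expn0 ?expn1 ?mul1n in Eu.
  + have : odd (a + 1) by rewrite Eu. lia.
  + have := oddE ou; lia.
  + have Q0 : 0 < 2 ^ s by rewrite expn_gt0.
    set Q := 2 ^ s in Q0.
    have E4 : 2 ^ s.+2 = 4 * Q by rewrite !expnS; lia.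
    have E8 : 2 ^ s.+3 = 8 * Q by rewrite !expnS; lia.
    rewrite E4 in Eu.
    have u0 : 0 < u by move: ou; case: u {Eu}.
    have [w Ew] : exists w, w + u = 2 * Q * u * u.
      exists (2 * Q * u * u - u). apply: subnK. nia.
    exists s.+3; split => //.
    * exists w; split.
        have : ~~ odd (w + u) by rewrite Ew !oddM.
        by rewrite oddD ou; case: (odd w).
      have E2 : (a + 1) * (a + 1) = 16 * Q * Q * u * u by rewrite Eu; lia.
      have Hw8 : 8 * Q * w + 8 * Q * u = 16 * Q * Q * u * u.
        by rewrite -mulnDr Ew; lia.
      rewrite E8; lia.
    * rewrite E8 => -[q Hq]; lia.
    * split; first lia.
      move=> _; split.
        rewrite /= E4; exists (Z.of_nat u); lia.
      rewrite E8 => -[q Hq].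
      have [v Ev] := oddE ou.
      have : (Z.of_nat Q * (1 + 2 * Z.of_nat v) = Z.of_nat Q * (2 * q))%Z.
        apply: (Zcancel (Q := 4%Z)); first lia. rewrite Eu Ev in Hq. lia.
      move/Zcancel; lia.
Qed.

Definition Sa a t (x : nat) : Prop := cg (2 ^ t) x 1 \/ cg (2 ^ t) x a.

Lemma cg_odd t x b : 0 < t -> cg (2 ^ t) x b -> odd x = odd b.
Proof.
move=> t0 /(@cg_le 1) => /(_ t0) [q H].
have := oddE; case ox: (odd x); case ob: (odd b) => // _; lia.
Qed.

Lemma sq1 a t : good a t -> cg (2 ^ t) (a * a) 1.
Proof. case=> _ _ [w [_ Ew]] _ _; rewrite mulnn Ew; exists (Z.of_nat w); lia. Qed.

Lemma pow_cls a t : good a t -> forall j, cg (2 ^ t) (a ^ j) 1 \/ cg (2 ^ t) (a ^ j) a.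
Proof.
move=> g; elim=> [|j [IH|IH]].
- by left; rewrite expn0; apply: cg_refl.
- by right; rewrite expnS -[X in cg _ _ X]muln1; apply: cg_mull.
- left; rewrite expnS; exact: cg_trans (cg_mull a IH) (sq1 g).
Qed.

Lemma clos_sub a t x : good a t -> clos2 (powset a) x -> Sa a t x.
Proof.
move=> g [ox /(_ t) [s [[j [j0 ->]] [k Ek]]]].
have H : cg (2 ^ t) x (a ^ j) by exists (- Z.of_nat k)%Z; rewrite Ek; lia.
case: (pow_cls g j) => H'; [left|right]; exact: cg_trans H H'.
Qed.

Lemma clos_sup a t x : good a t -> Sa a t x -> clos2 (powset a) x.
Proof.
move=> g Sx; have [t3 oa [w [ow Ew]] _ _] := g.
have t0 : 0 < t by lia.
split.
  case: Sx => /(cg_odd t0) -> //.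
move=> m.
pose M := m + x + t.
have xM : x < 2 ^ M.
  apply: (leq_trans (ltn_expl x (isT : 1 < 2))); rewrite leq_exp2l //; lia.
pose y := x + 2 ^ M.
have yx : cg (2 ^ t) y x by apply: (@cg_le t M); [lia | apply: cg_addN].
have [b [ob Hb [j [j0 Ej]]]] : exists b, [/\ odd b, cg (2 ^ t) y b &
    exists j, 0 < j /\ forall k, b * (a ^ 2) ^ k = a ^ (j + 2 * k)].
  case: Sx => Sx.
  - exists (a ^ 2); split.
    + by rewrite oddX oa orbT.
    + apply: cg_trans yx (cg_trans Sx _); rewrite -mulnn; apply: cg_sym; exact: sq1 g.
    + exists 2; split => // k; by rewrite -expnM -expnD.
  - exists a; split => //.
    + exact: cg_trans yx Sx.
    + exists 1; split => // k; by rewrite -expnM expnS.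
have t2 : 1 < t by lia.
have [k Hk] := lift t2 ow Ew ob (M.+1 - t) Hb.
rewrite subnKC in Hk; last lia.
exists (b * (a ^ 2) ^ k); split.
  by exists (j + 2 * k); split; [lia | apply: Ej].
set s := b * (a ^ 2) ^ k in Hk *.
have yM : y < 2 ^ M.+1 by rewrite expnS /y; lia.
have sy : y <= s.
  case: Hk => q Hq.
  have P0 : 0 < 2 ^ M.+1 by rewrite expn_gt0.
  move: Hq yM P0; clearbody y s; move: (2 ^ M.+1) => P Hq yM P0.
  case: (Z.le_gt_cases 0 q) => hq.
  - have : (0 <= Z.of_nat P * q)%Z by apply: Z.mul_nonneg_nonneg; lia.
    lia.
  - have : (Z.of_nat P * q <= - Z.of_nat P)%Z by nia.
    lia.
have Hm : cg (2 ^ m) s x.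
  apply: (@cg_le m M); first lia.
  apply: cg_trans (@cg_le M M.+1 _ _ _ Hk) _ => //.
  by exists 1%Z; rewrite /y; lia.
case: Hm => q Hq.
have P0 : 0 < 2 ^ m by rewrite expn_gt0.
have xy : x <= y by rewrite /y; lia.
have q0 : (0 <= q)%Z.
  move: Hq sy P0; clearbody y s; move: (2 ^ m) => P Hq sy P0.
  case: (Z.le_gt_cases 0 q) => // hq.
  have : (Z.of_nat P * q <= - Z.of_nat P)%Z by nia.
  lia.
exists (Z.to_nat q); lia.
Qed.

Lemma clos_eq a t : good a t -> clos2 (powset a) = Sa a t.
Proof.
move=> g; apply: funext => x; apply: propext; split.
- exact: clos_sub.
- exact: clos_sup.
Qed.

Lemma pisetP (X : nat -> Prop) m r : r \in piset X m <-> exists x, X x /\ inZp x = r.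
Proof. by rewrite inE; split => /asboolP. Qed.

Lemma piset_small a t m : good a t -> 0 < m -> m <= t -> #|piset (Sa a t) m| <= 2.
Proof.
move=> g m0 mt.
have sub : piset (Sa a t) m \subset [set inZp 1; inZp a].
  apply/subsetP => r /pisetP [x [Sx <-]]; rewrite !inE.
  by case: Sx => /(cg_le mt) /(inZpP _ _ m0) ->; rewrite eqxx ?orbT.
apply: (leq_trans (subset_leq_card sub)).
by rewrite cards2; case: (_ != _).
Qed.

Lemma not_cg_half t u : ~ cg (2 ^ t.+1) u (u + 2 ^ t).
Proof.
case=> q; rewrite Z2pow => H.
have P0 : 0 < 2 ^ t by rewrite expn_gt0.
have : (Z.of_nat (2 ^ t) * (1 + 2 * q) = Z.of_nat (2 ^ t) * 0)%Z by lia.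
move/Zcancel; lia.
Qed.

Definition four a t : seq 'Z_(2 ^ t.+1) := [:: inZp 1; inZp (1 + 2 ^ t); inZp a; inZp (a + 2 ^ t)].

Lemma piset_big_mem a t : good a t -> piset (Sa a t) t.+1 =i four a t.
Proof.
move=> g r; apply/idP/idP.
- move/pisetP => [x [Sx <-]]; rewrite /four !inE.
  case: Sx => /cg_split [] /(inZpP _ _ (ltn0Sn t)) ->; rewrite eqxx ?orbT //.
- rewrite /four !inE => /or4P [] /eqP ->; apply/asboolP.
  + exists 1; split => //; left; exact: cg_refl.
  + exists (1 + 2 ^ t); split => //; left; exact: cg_addN.
  + exists a; split => //; right; exact: cg_refl.
  + exists (a + 2 ^ t); split => //; right; exact: cg_addN.
Qed.

Lemma four_uniq a t : good a t -> uniq (four a t).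
Proof.
case=> t3 _ _ na _.
have N u v : ~ cg (2 ^ t) u v -> (inZp u : 'Z_(2 ^ t.+1)) != inZp v.
  move=> H; apply/eqP => /(inZpP _ _ (ltn0Sn t)) /(@cg_le t t.+1 _ _ (leqnSn t)) K; exact: H K.
have na' : ~ cg (2 ^ t) a (1 + 2 ^ t).
  move=> H; apply: na; apply: cg_trans H _; exact: cg_addN.
have na'' : ~ cg (2 ^ t) (a + 2 ^ t) 1.
  move=> H; apply: na; apply: cg_trans _ H; apply: cg_sym; exact: cg_addN.
have na3 : ~ cg (2 ^ t) (a + 2 ^ t) (1 + 2 ^ t).
  move=> H; apply: na''; apply: cg_trans H _; exact: cg_addN.
have H1 : (inZp 1 : 'Z_(2 ^ t.+1)) != inZp (1 + 2 ^ t).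
  by apply/eqP => /(inZpP _ _ (ltn0Sn t)); apply: not_cg_half.
have H2 : (inZp a : 'Z_(2 ^ t.+1)) != inZp (a + 2 ^ t).
  by apply/eqP => /(inZpP _ _ (ltn0Sn t)); apply: not_cg_half.
rewrite /four /= !inE !negb_or H1 H2 /= !andbT.
have S u v : ~ cg (2 ^ t) v u -> ~ cg (2 ^ t) u v by move=> H K; apply: H; exact: cg_sym.
by rewrite !N //; apply: S.
Qed.

Lemma piset_big_card a t : good a t -> #|piset (Sa a t) t.+1| = 4.
Proof.
move=> g; rewrite (eq_card (piset_big_mem g)).
by move/card_uniqP: (four_uniq g) => ->.
Qed.

Lemma nprop_big a t : good a t -> nprop (Sa a t) t.+1.
Proof.
move=> g; split => //; split; last by rewrite piset_big_card.
move=> y y0; split.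
- by move=> Sy; exists y.
- move=> [x [Sx /(inZpP _ _ (ltn0Sn t)) /(@cg_le t t.+1 _ _ (leqnSn t)) H]].
  by case: Sx => K; [left|right]; exact: cg_trans H K.
Qed.

Lemma nX_eq a t : good a t -> nX (Sa a t) = t.+1.
Proof.
move=> g.
have P : nprop (Sa a t) t.+1 /\ forall k, nprop (Sa a t) k -> t.+1 <= k.
  split; first exact: nprop_big.
  move=> k [k0 [_ k3]]; rewrite ltnNge; apply/negP => kt.
  have := piset_small g k0 kt; lia.
have [H1 H2] : nprop (Sa a t) (nX (Sa a t)) /\ forall k, nprop (Sa a t) k -> nX (Sa a t) <= k.
  apply: (epsilon_spec (inhabits 0) (fun m => nprop (Sa a t) m /\ forall k, nprop (Sa a t) k -> m <= k)).
  by exists t.+1.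
apply/eqP; rewrite eqn_leq H2 ?andbT; last exact: nprop_big.
exact: P.2 _ H1.
Qed.

Lemma Sa_mul a t x y : good a t -> Sa a t x -> Sa a t y -> Sa a t (x * y).
Proof.
move=> g Sx Sy.
have E u v : cg (2 ^ t) x u -> cg (2 ^ t) y v -> cg (2 ^ t) (x * y) (u * v).
  move=> Hx Hy; apply: cg_trans (cg_mull x Hy) _.
  rewrite ![_ * v]mulnC; exact: cg_mull v Hx.
case: Sx => Hx; case: Sy => Hy; have := E _ _ Hx Hy; rewrite ?mul1n ?muln1.
- by left.
- by right.
- by right.
- move=> K; left; exact: cg_trans K (sq1 g).
Qed.

Lemma Sa_odd a t x : good a t -> Sa a t x -> odd x.
Proof.
case=> t3 oa _ _ _ Sx; have t0 : 0 < t by lia.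
by case: Sx => /(cg_odd t0) ->.
Qed.

Lemma iX_eq a t : good a t -> 4 * iX (Sa a t) = 2 ^ t.
Proof.
move=> g; rewrite /iX (nX_eq g).
have p1 : 1 < 2 ^ t.+1 by rewrite -{1}(expn0 2) ltn_exp2l.
have gs : group_set (piunits (Sa a t) t.+1).
  apply/group_setP; split.
  - rewrite !inE; apply/asboolP; exists 1; split => //; left; exact: cg_refl.
  - move=> u v; rewrite !inE => /asboolP [x [Sx Ex]] /asboolP [y [Sy Ey]].
    apply/asboolP; exists (x * y); split; first exact: Sa_mul.
    rewrite FinRing.val_unitM -Ex -Ey; apply: val_inj => /=.
    by rewrite modnMm.
have L := Lagrange (G := [set: {unit 'Z_(2 ^ t.+1)}]%G) (H := Group gs) (subsetT _).
rewrite /= in L.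
have cG : #|[set: {unit 'Z_(2 ^ t.+1)}]| = 2 ^ t.
  rewrite -[[set: _]]/(units_Zp (2 ^ t.+1)) card_units_Zp ?expn_gt0 //.
  by rewrite totient_pfactor // mul1n.
have cH : #|piunits (Sa a t) t.+1| = 4.
  rewrite -(card_imset _ val_inj) -(piset_big_card g).
  apply: eq_card => r; apply/imsetP/idP.
  - by case=> u; rewrite inE => Hu ->.
  - move=> Hr; have := Hr; rewrite inE => /asboolP [x [Sx Ex]].
    have Ur : r \is a GRing.unit.
      rewrite -Ex -Zp_nat unitZpE // coprime_pexpl // coprime2n.
      exact: Sa_odd Sx.
    exists (Sub r Ur); last by rewrite SubK.
    by rewrite inE SubK.
rewrite cH cG in L.
exact: L.
Qed.

Lemma cg4 t x y : 2 <= t -> cg (2 ^ t) x y -> x %% 4 = y %% 4.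
Proof. move=> t2 /(cg_le t2) H; have := proj2 (@cgP (2 ^ 2) x y isT) H; by []. Qed.

Lemma A1 a t x : good a t -> a %% 4 = 1 -> (Sa a t x <-> cg (2 ^ t.-1) x 1).
Proof.
move=> g a4; have [t3 _ _ na [A _]] := g.
have Et : t = t.-1.+1 by lia.
split.
- case=> H; first exact: cg_le (leq_pred t) H.
  exact: cg_trans (cg_le (leq_pred t) H) (A a4).
- move=> /cg_split []; rewrite -Et => H; first by left.
  right; apply: cg_trans H _.
  case: (cg_split (A a4)); rewrite -Et => K; first by case: (na K).
  exact: cg_sym.
Qed.

Lemma A2 a t x : good a t -> Sa a t x -> x %% 4 = 1 \/ x %% 4 = a %% 4.
Proof.
case=> t3 _ _ _ _ Sx.
case: Sx => /(cg4 (ltnW t3)) ->; by [left | right].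
Qed.

Lemma A3 a t x : good a t -> a %% 4 = 3 -> Sa a t x -> x %% 4 = 1 -> cg (2 ^ t) x 1.
Proof.
move=> g a4 Sx x4; have [t3 _ _ _ _] := g.
case: Sx => // /(cg4 (ltnW t3)); lia.
Qed.

Lemma Sa_ext a t b s : (forall x, Sa a t x <-> Sa b s x) -> Sa a t = Sa b s.
Proof. by move=> H; apply: funext => x; apply: propext. Qed.

Theorem lemma4p8 (X Y : nat -> Prop) :
  inX2 X -> inX2 Y -> X <> Y ->
  ((forall x, X x -> Y x) <->
   ((forall x, X x -> exists k : nat, x = 1 + 4 * k) /\ (iX Y < iX X)%N)).
Proof.
move=> [a [oa [a1 ->]]] [b [ob [b1 ->]]].
have [ta ga] := descr oa a1; have [tb gb] := descr ob b1.
rewrite (clos_eq ga) (clos_eq gb) => XY.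
have IE : (iX (Sa b tb) < iX (Sa a ta)) = (tb < ta).
  by rewrite -(ltn_pmul2l (isT : 0 < 4)) (iX_eq ga) (iX_eq gb) ltn_exp2l.
rewrite IE.
have [ta3 _ _ naa [Aa1 Aa3]] := ga.
have [tb3 _ _ nab [Ab1 Ab3]] := gb.
have Xa : Sa a ta a by right; exact: cg_refl.
split.
- move=> sub.
  have : a %% 4 = 1 \/ a %% 4 = 3 by lia.
  case=> a4.
  + split.
      move=> x /(A2 ga); rewrite a4 => -[] x4; exists (x %/ 4); lia.
    pose x0 := 1 + 2 ^ ta.-1.
    have X0 : Sa a ta x0 by apply/(A1 x0 ga a4); exact: cg_addN.
    have x04 : x0 %% 4 = 1.
      have -> : x0 = 1 + 4 * 2 ^ (ta.-1 - 2).
        by rewrite /x0 -[4]/(2 ^ 2) -expnD subnKC //; lia.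
      lia.
    have : b %% 4 = 1 \/ b %% 4 = 3 by lia.
    case=> b4.
    * have := sub x0 X0; rewrite (A1 x0 gb b4) => H.
      have tle : tb <= ta.
        rewrite leqNgt; apply/negP => lt.
        have K : cg (2 ^ ta.-1.+1) 1 (1 + 2 ^ ta.-1).
          apply: cg_sym; apply: cg_le H; lia.
        exact: not_cg_half K.
      rewrite ltn_neqAle tle andbT; apply/negP => /eqP E; apply: XY.
      subst tb; apply: Sa_ext => x.
      by rewrite (A1 x ga a4) (A1 x gb b4).
    * have H := A3 gb b4 (sub x0 X0) x04.
      rewrite ltnNge; apply/negP => lt.
      have K : cg (2 ^ ta.-1.+1) 1 (1 + 2 ^ ta.-1).
        apply: cg_sym; apply: cg_le H; lia.
      exact: not_cg_half K.
  + exfalso.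
    have Ya := sub a Xa.
    have b4 : b %% 4 = 3.
      case: (A2 gb Ya); lia.
    have X1 : Sa a ta (1 + 2 ^ ta) by left; exact: cg_addN.
    have x14 : (1 + 2 ^ ta) %% 4 = 1.
      have -> : 1 + 2 ^ ta = 1 + 4 * 2 ^ (ta - 2).
        by rewrite -[4]/(2 ^ 2) -expnD subnKC //; lia.
      lia.
    have H := A3 gb b4 (sub _ X1) x14.
    have tle : tb <= ta.
      rewrite leqNgt; apply/negP => lt.
      have K : cg (2 ^ ta.+1) 1 (1 + 2 ^ ta).
        apply: cg_sym; apply: cg_le H; lia.
      exact: not_cg_half K.
    have ab : cg (2 ^ tb) a b.
      case: Ya => // K; have := cg4 (ltnW tb3) K; lia.
    case: (ltngtP tb ta) tle => // [lt|E] _.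
    * have K1 : cg (2 ^ tb) (a + 1) 0 by apply: cg_le (proj1 (Aa3 a4)); lia.
      have K2 : cg (2 ^ tb) (b + 1) (a + 1) by apply: cg_add; exact: cg_sym.
      exact: (proj2 (Ab3 b4)) (cg_trans K2 K1).
    * apply: XY; subst tb; apply: Sa_ext => x; split.
      - case=> H'; [left => // | right]; exact: cg_trans H' ab.
      - case=> H'; [left => // | right]; exact: cg_trans H' (cg_sym ab).
- move=> [h4 lt] x.
  have a4 : a %% 4 = 1 by have [k ->] := h4 a Xa; lia.
  move/(A1 x ga a4) => H; left; apply: cg_le H; lia.
Qed.
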